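(* For every filter $\Xi\in P_{III*}$, the class $\mathcal{C}_{\Xi\text{-unc}}$ is nonempty if and only if $\wedge\Xi\not\subseteq\vee\overline{\Xi}$ (i.e. $\wedge\Xi\not\preceq\vee\overline{\Xi}$).
   Context: Let $n\ge1$ and $L=\{1,\dots,n\}$. For each $i\in L$ let $\mathcal H_i$ be a Hilbert space with $1<\dim\mathcal H_i<\infty$; for $X\subseteq L$ put $\mathcal H_X=\bigotimes_{i\in X}\mathcal H_i$ and let $\mathcal D_X$ be the set of density operators (positive semidefinite, trace one) on $\mathcal H_X$. $P_I$ denotes the set of partitions of $L$ (sets of nonempty pairwise disjoint subsets of $L$ whose union is $L$), partially ordered by refinement: $\upsilon\preceq\xi$ iff every part of $\upsilon$ is contained in some part of $\xi$. For $\xi\in P_I$, $\mathcal D_{\xi\text{-unc}}=\{\varrho\in\mathcal D_L:\ \varrho=\bigotimes_{X\in\xi}\varrho_X \text{ for some } \varrho_X\in\mathcal D_X\}$. For any set $S\subseteq P_I$ of partitions, $\mathcal D_{S\text{-unc}}=\bigcup_{\xi\in S}\mathcal D_{\xi\text{-unc}}$ (so $\mathcal D_{\emptyset\text{-unc}}=\emptyset$). $P_{II}$ is the set of nonempty down-sets (ideals) of $(P_I,\preceq)$, partially ordered by inclusion ($\boldsymbol\upsilon\preceq\boldsymbol\xi$ iff $\boldsymbol\upsilon\subseteq\boldsymbol\xi$); meets and joins in $P_{II}$ are intersections and unions. $P_{II*}\subseteq P_{II}$ is an arbitrary fixed nonempty subset with the induced order, and $P_{III*}$ is the set of nonempty up-sets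 of $P_{II*}$ (nonempty $\Xi\subseteq P_{II*}$ such that $\boldsymbol\xi\in\Xi$, $\boldsymbol\upsilon\in P_{II*}$, $\boldsymbol\xi\subseteq\boldsymbol\upsilon$ imply $\boldsymbol\upsilon\in\Xi$). For $\Xi\in P_{III*}$: $\overline{\Xi}=P_{II*}\setminus\Xi$, $\wedge\Xi=\bigcap_{\boldsymbol\xi\in\Xi}\boldsymbol\xi$, $\vee\overline\Xi=\bigcup_{\boldsymbol\xi'\in\overline\Xi}\boldsymbol\xi'$ (which is $\emptyset$ if $\overline\Xi=\emptyset$); these are sets of partitions, compared by inclusion. The class of strictly $\Xi$-uncorrelated states is $\mathcal C_{\Xi\text{-unc}}=\bigcap_{\boldsymbol\xi'\in\overline\Xi}(\mathcal D_L\setminus\mathcal D_{\boldsymbol\xi'\text{-unc}})\cap\bigcap_{\boldsymbol\xi\in\Xi}\mathcal D_{\boldsymbol\xi\text{-unc}}$. *)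

(* Defs.v *)
From HB Require Import structures.
From mathcomp Require Import all_boot all_order all_algebra.
Set Implicit Arguments. Unset Strict Implicit. Unset Printing Implicit Defensive.
Import Order.TTheory GRing.Theory Num.Theory.
Local Open Scope ring_scope.

(* Sites L = 'I_n; the local Hilbert space H_i is C^(e i + 2), so
   1 < dim H_i < oo.  A basis vector of H_L is a configuration
   c : forall i, 'I_(e i).+2.  A basis vector of H_X is represented as a
   configuration which is 0 outside X (canonical iso with (x)_{i in X} H_i). *)

Definition cfg (n : nat) (e : 'I_n -> nat) := {dffun forall i : 'I_n, 'I_(e i).+2}.

Definition supp_in (n : nat) (e : 'I_n -> nat) (X : {set 'I_n}) (c : cfg e) : bool :=
  [forall i, (i \notin X) ==> (c i == ord0)].

Definition idx (n : nat) (e : 'I_n -> nat) (X : {set 'I_n}) := {c : cfg e | supp_in X c}.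

Definition restr_fun (n : nat) (e : 'I_n -> nat) (X : {set 'I_n}) (c : cfg e) : cfg e :=
  finfun (fun i : 'I_n => (if i \in X then c i else ord0) : 'I_(e i).+2).

Lemma restr_supp (n : nat) (e : 'I_n -> nat) (X : {set 'I_n}) (c : cfg e) :
  supp_in X (restr_fun X c).
Proof.
apply/forallP => i; apply/implyP => Hi.
by rewrite /restr_fun ffunE (negbTE Hi).
Qed.

Definition restr (n : nat) (e : 'I_n -> nat) (X : {set 'I_n}) (c : cfg e) : idx e X :=
  exist _ (restr_fun X c) (restr_supp X c).

(* operators on H_X, as matrices in the product basis *)
Definition op (C : Type) (n : nat) (e : 'I_n -> nat) (X : {set 'I_n}) :=
  idx e X -> idx e X -> C.

Definition psd (C : numClosedFieldType) (n : nat) (e : 'I_n -> nat) (X : {set 'I_n})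
  (A : op C e X) : Prop :=
  forall v : idx e X -> C, 0 <= \sum_(a : idx e X) \sum_(b : idx e X) (v a)^* * A a b * v b.

Definition density (C : numClosedFieldType) (n : nat) (e : 'I_n -> nat) (X : {set 'I_n})
  (A : op C e X) : Prop :=
  psd A /\ \sum_(a : idx e X) A a a = 1.

Definition tensor (C : numClosedFieldType) (n : nat) (e : 'I_n -> nat)
  (xi : {set {set 'I_n}}) (f : forall X : {set 'I_n}, op C e X) : op C e [set: 'I_n] :=
  fun a b => \prod_(X in xi) f X (restr X (val a)) (restr X (val b)).

Definition is_partition (n : nat) (xi : {set {set 'I_n}}) : Prop :=
  partition xi [set: 'I_n].

Definition refines (n : nat) (u x : {set {set 'I_n}}) : Prop :=
  forall A, A \in u -> exists2 B, B \in x & A \subset B.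

Definition unc (C : numClosedFieldType) (n : nat) (e : 'I_n -> nat)
  (xi : {set {set 'I_n}}) (rho : op C e [set: 'I_n]) : Prop :=
  exists f : forall X : {set 'I_n}, op C e X,
    (forall X, X \in xi -> density (f X)) /\ rho = tensor xi f.

Definition uncS (C : numClosedFieldType) (n : nat) (e : 'I_n -> nat)
  (S : {set {set {set 'I_n}}}) (rho : op C e [set: 'I_n]) : Prop :=
  exists2 xi, xi \in S & unc xi rho.

Definition isPII (n : nat) (S : {set {set {set 'I_n}}}) : Prop :=
  S != set0 /\ (forall xi, xi \in S -> is_partition xi) /\
  (forall u x, x \in S -> is_partition u -> refines u x -> u \in S).

Definition isPIII (n : nat) (PIIs : {set {set {set {set 'I_n}}}})
  (Xi : {set {set {set {set 'I_n}}}}) : Prop :=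
  Xi \subset PIIs /\ Xi != set0 /\
  (forall x y, x \in Xi -> y \in PIIs -> x \subset y -> y \in Xi).

Definition meetS (n : nat) (Xi : {set {set {set {set 'I_n}}}}) : {set {set {set 'I_n}}} :=
  \bigcap_(x in Xi) x.

Definition joinSbar (n : nat) (PIIs Xi : {set {set {set {set 'I_n}}}}) :
  {set {set {set 'I_n}}} :=
  \bigcup_(x in PIIs :\: Xi) x.

Definition C_unc (C : numClosedFieldType) (n : nat) (e : 'I_n -> nat)
  (PIIs Xi : {set {set {set {set 'I_n}}}}) (rho : op C e [set: 'I_n]) : Prop :=
  density rho /\
  (forall x', x' \in PIIs :\: Xi -> ~ uncS x' rho) /\
  (forall x, x \in Xi -> uncS x rho).

(* Main.v *)
Require Import Defs.
From HB Require Import structures.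
From mathcomp Require Import all_boot all_order all_algebra.
From mathcomp Require Import ring.
From Stdlib Require Import FunctionalExtensionality.
Set Implicit Arguments. Unset Strict Implicit. Unset Printing Implicit Defensive.
Import Order.TTheory GRing.Theory Num.Theory.
Local Open Scope ring_scope.

Lemma suppT (n : nat) (e : 'I_n -> nat) (c : cfg e) : supp_in [set: 'I_n] c.
Proof. by apply/forallP => i; rewrite in_setT. Qed.

Definition toT (n : nat) (e : 'I_n -> nat) (c : cfg e) : idx e [set: 'I_n] :=
  exist _ c (suppT c).

Lemma toT_val (n : nat) (e : 'I_n -> nat) (a : idx e [set: 'I_n]) : toT (val a) = a.
Proof. exact: val_inj. Qed.

Definition mix (n : nat) (e : 'I_n -> nat) (W : {set 'I_n}) (c d : cfg e) : cfg e :=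
  finfun (fun i : 'I_n => (if i \in W then c i else d i) : 'I_(e i).+2).

Lemma mixE (n : nat) (e : 'I_n -> nat) (W : {set 'I_n}) (c d : cfg e) i :
  mix W c d i = if i \in W then c i else d i.
Proof. by rewrite /mix ffunE. Qed.

Lemma restr_eq (n : nat) (e : 'I_n -> nat) (X : {set 'I_n}) (c d : cfg e) :
  {in X, forall i, c i = d i} -> restr X c = restr X d.
Proof.
move=> H; apply: val_inj => /=; apply/ffunP => i; rewrite /restr_fun !ffunE.
by case: ifP => // /H ->.
Qed.

Lemma restr_val (n : nat) (e : 'I_n -> nat) (X : {set 'I_n}) (p : idx e X) :
  restr X (val p) = p.
Proof.
apply: val_inj => /=; apply/ffunP => i; rewrite /restr_fun !ffunE.
case: ifP => // Hi; have /forallP /(_ i) := valP p.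
by rewrite Hi /= => /eqP ->.
Qed.

Lemma restr_funE (n : nat) (e : 'I_n -> nat) (X : {set 'I_n}) (c : cfg e) i :
  restr_fun X c i = if i \in X then c i else ord0.
Proof. by rewrite /restr_fun ffunE. Qed.

Lemma sum_idx (C : numClosedFieldType) (n : nat) (e : 'I_n -> nat) (X : {set 'I_n})
  (G : idx e X -> C) :
  \sum_(p : idx e X) G p = \sum_(c : cfg e | supp_in X c) G (restr X c).
Proof.
rewrite (reindex (fun p : idx e X => val p)) /=.
  by apply: eq_big => p; [rewrite (valP p) | rewrite restr_val].
exists (fun c => restr X c) => c Hc; first by rewrite restr_val.
rewrite /= /restr_fun; apply/ffunP => i; rewrite ffunE.
case: ifP => // Hi; move: Hc; rewrite inE => /forallP /(_ i).
by rewrite Hi /= => /eqP ->.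
Qed.

Definition c0 (n : nat) (e : 'I_n -> nat) : cfg e := finfun (fun i : 'I_n => (ord0 : 'I_(e i).+2)).

Definition splitc (n : nat) (e : 'I_n -> nat) (P : {set {set 'I_n}}) (c : cfg e) :
  {ffun {set 'I_n} -> cfg e} :=
  [ffun X => if X \in P then restr_fun X c else c0 e].

Definition glue (n : nat) (e : 'I_n -> nat) (P : {set {set 'I_n}})
  (f : {ffun {set 'I_n} -> cfg e}) : cfg e :=
  finfun (fun i : 'I_n => f (pblock P i) i).

Lemma trace_tensor (C : numClosedFieldType) (n : nat) (e : 'I_n -> nat)
  (P : {set {set 'I_n}}) (hP : partition P [set: 'I_n])
  (G : forall X : {set 'I_n}, idx e X -> C) :
  \sum_(a : idx e [set: 'I_n]) \prod_(X in P) G X (restr X (val a)) =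
  \prod_(X in P) \sum_(p : idx e X) G X p.
Proof.
case/and3P: hP => /eqP hcov htriv h0.
rewrite (reindex (@toT n e)) /=; last first.
  by exists val => a _ //; rewrite toT_val.
under [RHS]eq_bigr do rewrite sum_idx.
rewrite (big_distr_big_dep (c0 e)) /=.
rewrite (reindex (splitc P)) /=; last first.
  exists (glue P) => [c _|f Hf].
    apply/ffunP => i; rewrite /glue /splitc !ffunE.
    have Hi : i \in cover P by rewrite hcov in_setT.
    by rewrite (pblock_mem Hi) restr_funE mem_pblock Hi.
  move: Hf; rewrite inE => /pfamilyP [Hsup Hin].
  apply/ffunP => X; rewrite /splitc ffunE.
  case: ifPn => HX.
    apply/ffunP => i; rewrite restr_funE /glue.
    case: ifPn => Hi.
      by rewrite ffunE (def_pblock htriv HX Hi).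
    by have := Hin X HX; move=> /forallP /(_ i); rewrite Hi /= => /eqP ->.
  apply/esym/eqP; apply: contraNT HX => HX.
  by apply: (subsetP Hsup); rewrite !inE.
apply: eq_big => c.
  apply/esym/pfamilyP; split.
    by apply/subsetP => X; rewrite inE /splitc ffunE; case: ifP => //; rewrite eqxx.
  move=> X HX; rewrite /splitc ffunE HX; exact: restr_supp.
move=> _; apply: eq_bigr => X HX.
rewrite /splitc ffunE HX; congr (G X _).
by apply: restr_eq => i Hi; rewrite restr_funE Hi.
Qed.

Lemma psd_diag (C : numClosedFieldType) (n : nat) (e : 'I_n -> nat) (X : {set 'I_n})
  (A : op C e X) a : psd A -> 0 <= A a a.
Proof.
move=> /(_ (fun x => if x == a then 1 else 0)).
set S := (X in 0 <= X -> _).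
suff -> : S = A a a by [].
rewrite /S (bigD1 a) //= [X in _ + X]big1; last first.
  by move=> x Hx; apply: big1 => y _; rewrite (negbTE Hx) conjC0 !mul0r.
rewrite addr0 (bigD1 a) //= [X in _ + X]big1; last first.
  by move=> y Hy; rewrite (negbTE Hy) mulr0.
by rewrite addr0 eqxx conjC1 mul1r mulr1.
Qed.

Lemma psd_rank1 (C : numClosedFieldType) (n : nat) (e : 'I_n -> nat) (X : {set 'I_n})
  (phi : idx e X -> C) (c : C) : 0 <= c -> psd (fun p q => c * (phi p * (phi q)^*)).
Proof.
move=> hc v.
set w := \sum_a (v a)^* * phi a.
have -> : \sum_a \sum_b (v a)^* * (c * (phi a * (phi b)^*)) * v b = c * (w * w^*).
  rewrite /w rmorph_sum /= mulr_suml mulr_sumr; apply: eq_bigr => a _.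
  rewrite !mulr_sumr; apply: eq_bigr => b _; rewrite rmorphM /= conjCK; ring.
exact: mulr_ge0 hc (mul_conjC_ge0 _).
Qed.

Lemma psd_scale (C : numClosedFieldType) (n : nat) (e : 'I_n -> nat) (X : {set 'I_n})
  (A : op C e X) (c : C) : 0 <= c -> psd A -> psd (fun p q => c * A p q).
Proof.
move=> hc hA v.
have -> : \sum_a \sum_b (v a)^* * (c * A a b) * v b =
          c * \sum_a \sum_b (v a)^* * A a b * v b.
  rewrite mulr_sumr; apply: eq_bigr => a _.
  rewrite mulr_sumr; apply: eq_bigr => b _; ring.
exact: mulr_ge0 hc (hA v).
Qed.

Lemma sum_img (C : numClosedFieldType) (I J : finType) (phi : J -> I)
  (inj : injective phi) (F : I -> C) :
  (forall a, a \notin [set phi p | p in [set: J]] -> F a = 0) ->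
  \sum_a F a = \sum_p F (phi p).
Proof.
move=> H; rewrite (bigID (mem [set phi p | p in [set: J]])) /= [X in _ + X]big1 ?addr0.
  by rewrite big_imset //; [apply: eq_bigl => p; rewrite in_setT | move=> x y _ _; apply: inj].
by move=> a /H.
Qed.

Lemma psd_compress (C : numClosedFieldType) (n : nat) (e : 'I_n -> nat) (X Z : {set 'I_n})
  (A : op C e X) (phi : idx e Z -> idx e X) (inj : injective phi) :
  psd A -> psd (fun p q => A (phi p) (phi q)).
Proof.
move=> hA v.
pose w a := if [pick p | phi p == a] is Some p then v p else 0.
have w0 : forall a, a \notin [set phi p | p in [set: idx e Z]] -> w a = 0.
  move=> a Ha; rewrite /w; case: pickP => // p /eqP Hp.
  by move: Ha; rewrite -Hp imset_f ?in_setT.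
have wphi : forall p, w (phi p) = v p.
  move=> p; rewrite /w; case: pickP => [p' /eqP /inj -> //|/(_ p)].
  by rewrite eqxx.
have := hA w.
rewrite (sum_img inj); last by move=> a /w0 ->; apply: big1 => b _; rewrite conjC0 !mul0r.
congr (_ <= _); apply: eq_bigr => p _.
rewrite (sum_img inj); last by move=> b /w0 ->; rewrite mulr0.
by apply: eq_bigr => q _; rewrite !wphi.
Qed.

Lemma part_cover (n : nat) (P : {set {set 'I_n}}) (hP : partition P [set: 'I_n]) (i : 'I_n) :
  exists2 X, X \in P & i \in X.
Proof.
case/and3P: hP => /eqP hcov _ _.
have : i \in cover P by rewrite hcov in_setT.
by rewrite /cover => /bigcupP [X HX Hi]; exists X.
Qed.

Lemma part_eq (n : nat) (P : {set {set 'I_n}}) (hP : partition P [set: 'I_n]) X Y i :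
  X \in P -> Y \in P -> i \in X -> i \in Y -> X = Y.
Proof.
case/and3P: hP => _ htriv _ HX HY HiX HiY.
by rewrite -(def_pblock htriv HX HiX) (def_pblock htriv HY HiY).
Qed.

Lemma part_disj (n : nat) (P : {set {set 'I_n}}) (hP : partition P [set: 'I_n]) X Y i :
  X \in P -> Y \in P -> X != Y -> i \in X -> i \notin Y.
Proof.
move=> HX HY HXY HiX; apply/negP => HiY; move/eqP: HXY; apply.
exact: (part_eq hP HX HY HiX HiY).
Qed.

Lemma part_nonempty (n : nat) (P : {set {set 'I_n}}) (hP : partition P [set: 'I_n]) X :
  X \in P -> exists i, i \in X.
Proof.
case/and3P: hP => _ _ h0 HX.
case: (set_0Vmem X) => [E|[i Hi]]; last by exists i.
by move: h0; rewrite -E HX.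
Qed.

Definition pairs (n : nat) (P Q : {set {set 'I_n}}) :=
  [set u in setX P Q | u.1 :&: u.2 != set0].

Definition meetP (n : nat) (P Q : {set {set 'I_n}}) : {set {set 'I_n}} :=
  [set u.1 :&: u.2 | u in pairs P Q].

Lemma meet_inj (n : nat) (P Q : {set {set 'I_n}})
  (hP : partition P [set: 'I_n]) (hQ : partition Q [set: 'I_n]) :
  {in pairs P Q &, injective (fun u => u.1 :&: u.2)}.
Proof.
move=> [X Y] [X' Y']; rewrite !inE /= => /andP [/andP [HX HY] H0] /andP [/andP [HX' HY'] _] E.
case/set0Pn: H0 => i Hi.
have Hi' : i \in X' :&: Y' by rewrite -E.
move: Hi Hi'; rewrite !inE => /andP [h1 h2] /andP [h3 h4].
by rewrite (part_eq hP HX HX' h1 h3) (part_eq hQ HY HY' h2 h4).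
Qed.

Lemma meet_partition (n : nat) (P Q : {set {set 'I_n}})
  (hP : partition P [set: 'I_n]) (hQ : partition Q [set: 'I_n]) :
  partition (meetP P Q) [set: 'I_n].
Proof.
apply/and3P; split.
- apply/eqP/setP => i; rewrite in_setT; apply/bigcupP.
  have [X HX HiX] := part_cover hP i; have [Y HY HiY] := part_cover hQ i.
  exists (X :&: Y); last by rewrite inE HiX HiY.
  apply/imsetP; exists (X, Y) => //.
  rewrite !inE /= HX HY /=; apply/set0Pn; exists i; by rewrite inE HiX HiY.
- apply/trivIsetP => A B /imsetP [[X Y] HXY ->] /imsetP [[X' Y'] HXY' ->] /= Hne.
  rewrite -setI_eq0; apply/eqP/setP => i; rewrite !inE.
  apply/negbTE/negP => /andP [/andP [h1 h2] /andP [h3 h4]]; move/eqP: Hne; apply.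
  move: HXY HXY'; rewrite !inE /= => /andP [/andP [HX HY] _] /andP [/andP [HX' HY'] _].
  by rewrite (part_eq hP HX HX' h1 h3) (part_eq hQ HY HY' h2 h4).
- apply/imsetP => [[[X Y]]]; rewrite !inE /= => /andP [_ H] E.
  by move: H; rewrite -E eqxx.
Qed.

Lemma meet_refl (n : nat) (P Q : {set {set 'I_n}}) : refines (meetP P Q) P.
Proof.
move=> A /imsetP [[X Y] HXY ->]; move: HXY; rewrite !inE /= => /andP [/andP [HX _] _].
by exists X => //; apply: subsetIl.
Qed.

Lemma meet_refr (n : nat) (P Q : {set {set 'I_n}}) : refines (meetP P Q) Q.
Proof.
move=> A /imsetP [[X Y] HXY ->]; move: HXY; rewrite !inE /= => /andP [/andP [_ HY] _].
by exists Y => //; apply: subsetIr.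
Qed.

Lemma partT (n : nat) (hn : (0 < n)%N) : partition [set [set: 'I_n]] [set: 'I_n].
Proof.
apply/and3P; split.
- by rewrite /cover big_set1.
- by apply/trivIsetP => A B; rewrite !inE => /eqP -> /eqP ->; rewrite eqxx.
- rewrite inE eq_sym; apply/set0Pn; by exists (Ordinal hn); rewrite in_setT.
Qed.

Definition Fr (C : numClosedFieldType) (n : nat) (e : 'I_n -> nat)
  (rho : op C e [set: 'I_n]) (a b : cfg e) : C := rho (toT a) (toT b).

Definition Phi (C : numClosedFieldType) (n : nat) (e : 'I_n -> nat)
  (rho : op C e [set: 'I_n]) (a0 a b : cfg e) (W : {set 'I_n}) : C :=
  Fr rho (mix W a a0) (mix W b a0) / Fr rho a0 a0.

Lemma Fr_tensor (C : numClosedFieldType) (n : nat) (e : 'I_n -> nat)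
  (rho : op C e [set: 'I_n]) P f c d :
  rho = tensor P f -> Fr rho c d = \prod_(X in P) f X (restr X c) (restr X d).
Proof. by move=> ->. Qed.

Lemma phi_split (C : numClosedFieldType) (n : nat) (e : 'I_n -> nat)
  (rho : op C e [set: 'I_n]) (P : {set {set 'I_n}}) (hP : partition P [set: 'I_n])
  f (hr : rho = tensor P f) (a0 : cfg e) (h0 : Fr rho a0 a0 != 0) a b W :
  Phi rho a0 a b W = \prod_(X in P) Phi rho a0 a b (W :&: X).
Proof.
pose D X := f X (restr X a0) (restr X a0).
have hF0 : Fr rho a0 a0 = \prod_(X in P) D X by rewrite (Fr_tensor _ _ hr).
have hX : forall X, X \in P -> Phi rho a0 a b (W :&: X) =
    f X (restr X (mix W a a0)) (restr X (mix W b a0)) / D X.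
  move=> X HX; rewrite /Phi (Fr_tensor _ _ hr) hF0 !(bigD1 X HX) /=.
  have -> : \prod_(X' | (X' \in P) && (X' != X)) f X' (restr X' (mix (W :&: X) a a0))
                (restr X' (mix (W :&: X) b a0)) = \prod_(X' | (X' \in P) && (X' != X)) D X'.
    apply: eq_bigr => X' /andP [HX' Hne]; rewrite /D.
    congr (f X' _ _); apply: restr_eq => i Hi; rewrite mixE inE;
      by rewrite (negbTE (part_disj hP HX' HX Hne Hi)) andbF.
  have hR : \prod_(X' | (X' \in P) && (X' != X)) D X' != 0.
    by move: h0; rewrite hF0 (bigD1 X HX) /= mulf_eq0 negb_or => /andP [].
  have -> : restr X (mix (W :&: X) a a0) = restr X (mix W a a0).
    by apply: restr_eq => i Hi; rewrite !mixE inE Hi andbT.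
  have -> : restr X (mix (W :&: X) b a0) = restr X (mix W b a0).
    by apply: restr_eq => i Hi; rewrite !mixE inE Hi andbT.
  by rewrite invfM mulrACA divff // mulr1.
rewrite (eq_bigr _ hX) prodf_div -hF0 /Phi (Fr_tensor _ _ hr) (Fr_tensor _ _ hr).
by [].
Qed.

Lemma mixT (n : nat) (e : 'I_n -> nat) (a a0 : cfg e) : mix [set: 'I_n] a a0 = a.
Proof. by apply/ffunP => i; rewrite mixE in_setT. Qed.

Lemma mix0 (n : nat) (e : 'I_n -> nat) (a a0 : cfg e) : mix set0 a a0 = a0.
Proof. by apply/ffunP => i; rewrite mixE inE. Qed.

Lemma mixxx (n : nat) (e : 'I_n -> nat) W (a0 : cfg e) : mix W a0 a0 = a0.
Proof. by apply/ffunP => i; rewrite mixE; case: ifP. Qed.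

Lemma mix_restr (n : nat) (e : 'I_n -> nat) W (a a0 : cfg e) :
  mix W (restr_fun W a) a0 = mix W a a0.
Proof. by apply/ffunP => i; rewrite !mixE restr_funE; case: (i \in W). Qed.

Lemma mix_inj (n : nat) (e : 'I_n -> nat) (Z : {set 'I_n}) (a0 : cfg e) :
  injective (fun p : idx e Z => toT (mix Z (val p) a0)).
Proof.
move=> p q /(congr1 val) /= E; apply: val_inj; apply/ffunP => i.
case: (boolP (i \in Z)) => Hi.
  by have := congr1 (fun c : cfg e => c i) E; rewrite /= !mixE Hi.
have /forallP /(_ i) := valP p; have /forallP /(_ i) := valP q.
by rewrite Hi /= => /eqP -> /eqP ->.
Qed.

Lemma Phi_meet (C : numClosedFieldType) (n : nat) (e : 'I_n -> nat)
  (rho : op C e [set: 'I_n]) (P Q : {set {set 'I_n}})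
  (hP : partition P [set: 'I_n]) (hQ : partition Q [set: 'I_n])
  f g (hf : rho = tensor P f) (hg : rho = tensor Q g)
  (a0 : cfg e) (h0 : Fr rho a0 a0 != 0) a b :
  Fr rho a b / Fr rho a0 a0 = \prod_(Z in meetP P Q) Phi rho a0 a b Z.
Proof.
have -> : Fr rho a b / Fr rho a0 a0 = Phi rho a0 a b [set: 'I_n] by rewrite /Phi !mixT.
rewrite (phi_split hP hf h0).
under eq_bigr => X _ do rewrite setTI (phi_split hQ hg h0).
rewrite pair_big /=.
rewrite (bigID (fun u => u.1 :&: u.2 != set0)) /= [X in _ * X]big1 ?mulr1; last first.
  move=> u /andP [_ /negbNE /eqP ->]; by rewrite /Phi !mix0 divff.
rewrite /meetP big_imset /=; last exact: meet_inj.
by apply: eq_bigl => u; rewrite !inE.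
Qed.

Lemma unc_meet (C : numClosedFieldType) (n : nat) (e : 'I_n -> nat)
  (rho : op C e [set: 'I_n]) (P Q : {set {set 'I_n}})
  (hP : partition P [set: 'I_n]) (hQ : partition Q [set: 'I_n]) :
  density rho -> unc P rho -> unc Q rho -> unc (meetP P Q) rho.
Proof.
move=> [hpsd htr] [f [_ hf]] [g [_ hg]].
have [a0 h0] : exists a0 : cfg e, Fr rho a0 a0 != 0.
  case: (pickP (fun a : idx e [set: 'I_n] => rho a a != 0)) => [a Ha|H].
    by exists (val a); rewrite /Fr toT_val.
  move: htr; rewrite big1 => [/eqP|a _]; first by rewrite eq_sym oner_eq0.
  by move: (H a) => /negbFE /eqP.
have F0ge0 : 0 <= Fr rho a0 a0 by apply: psd_diag.
pose Cz (Z : {set 'I_n}) (p q : idx e Z) := Fr rho (mix Z (val p) a0) (mix Z (val q) a0).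
have Cpsd : forall Z, psd (Cz Z).
  move=> Z; exact: (@psd_compress C n e [set: 'I_n] Z rho _ (@mix_inj n e Z a0) hpsd).
pose t Z := \sum_(p : idx e Z) Cz Z p p.
have tge0 : forall Z, 0 <= t Z by move=> Z; apply: sumr_ge0 => p _; apply: psd_diag.
have tne0 : forall Z, t Z != 0.
  move=> Z; apply/eqP => /(psumr_eq0P (fun p _ => psd_diag p (Cpsd Z))) /(_ (restr Z a0) isT).
  by rewrite /Cz /= mix_restr mixxx => /eqP; rewrite (negbTE h0).
pose h Z (p q : idx e Z) := (t Z)^-1 * Cz Z p q.
have htr1 : forall Z, \sum_(p : idx e Z) h Z p p = 1.
  by move=> Z; rewrite -mulr_sumr mulVf.
have hdens : forall Z, density (h Z).
  by move=> Z; split; [apply: psd_scale; [rewrite invr_ge0|]|].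
pose K := Fr rho a0 a0 * \prod_(Z in meetP P Q) (t Z / Fr rho a0 a0).
have hK : forall a b, rho a b = K * tensor (meetP P Q) h a b.
  move=> a b; rewrite -[a]toT_val -[b]toT_val.
  have := Phi_meet hP hQ hf hg h0 (val a) (val b).
  rewrite -/(Fr rho (val a) (val b)) => /(congr1 (fun x => x * Fr rho a0 a0)).
  rewrite divfK // => ->.
  rewrite /K /tensor /= mulrC -!mulrA; congr (_ * _).
  rewrite -big_split /=; apply: eq_bigr => Z _.
  rewrite /Phi /h /Cz /= !mix_restr.
  by field; rewrite tne0 h0.
have K1 : K = 1.
  move: htr; under eq_bigr do rewrite hK.
  rewrite -mulr_sumr (trace_tensor (meet_partition hP hQ) (fun Z p => h Z p p)).
  by rewrite big1 ?mulr1 // => Z _; apply: htr1.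
exists h; split => [Z _|]; first exact: hdens.
apply: functional_extensionality => a; apply: functional_extensionality => b.
by rewrite hK K1 mul1r.
Qed.

Definition oneo (n : nat) (e : 'I_n -> nat) (i : 'I_n) : 'I_(e i).+2 := @Ordinal (e i).+2 1 isT.

Definition oneF (n : nat) (e : 'I_n -> nat) : cfg e := finfun (fun i : 'I_n => oneo e i).

Definition good (n : nat) (e : 'I_n -> nat) (X : {set 'I_n}) (c : cfg e) : bool :=
  [forall i in X, c i == ord0] || [forall i in X, c i == oneo e i].

Lemma oneo_neq0 (n : nat) (e : 'I_n -> nat) i : (oneo e i == ord0) = false.
Proof. by []. Qed.

Lemma good_ext (n : nat) (e : 'I_n -> nat) (X : {set 'I_n}) (c d : cfg e) :
  {in X, forall i, c i = d i} -> good X c = good X d.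
Proof.
move=> H; rewrite /good; congr (_ || _); apply: eq_forallb_in => i Hi; by rewrite H.
Qed.

Lemma good_restr (n : nat) (e : 'I_n -> nat) (X : {set 'I_n}) (c : cfg e) :
  good X (restr_fun X c) = good X c.
Proof. by apply: good_ext => i Hi; rewrite restr_funE Hi. Qed.

Lemma good0 (n : nat) (e : 'I_n -> nat) (X : {set 'I_n}) (c : cfg e) :
  {in X, forall i, c i = ord0} -> good X c.
Proof. by move=> H; apply/orP; left; apply/forall_inP => i /H ->. Qed.

Lemma good1 (n : nat) (e : 'I_n -> nat) (X : {set 'I_n}) (c : cfg e) :
  {in X, forall i, c i = oneo e i} -> good X c.
Proof. by move=> H; apply/orP; right; apply/forall_inP => i /H ->. Qed.

Lemma notgood (n : nat) (e : 'I_n -> nat) (X : {set 'I_n}) (c : cfg e) i j :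
  i \in X -> j \in X -> c i = oneo e i -> c j = ord0 -> ~~ good X c.
Proof.
move=> Hi Hj ci cj; rewrite /good negb_or; apply/andP; split.
  by apply/forall_inP => /(_ i Hi); rewrite ci oneo_neq0.
by apply/forall_inP => /(_ j Hj); rewrite cj eq_sym oneo_neq0.
Qed.

Definition fgood (C : numClosedFieldType) (n : nat) (e : 'I_n -> nat) (X : {set 'I_n}) :
  op C e X := fun p q => 2^-1 * ((good X (val p))%:R * ((good X (val q))%:R)^*).

Lemma trace_fgood (C : numClosedFieldType) (n : nat) (e : 'I_n -> nat) (X : {set 'I_n}) :
  (exists i, i \in X) -> \sum_(p : idx e X) fgood C p p = 1.
Proof.
move=> [i0 Hi0].
pose zX : idx e X := restr X (c0 e).
pose oX : idx e X := restr X (oneF e).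
have gz : good X (val zX) by rewrite /= good_restr; apply: good0 => i _; rewrite ffunE.
have go : good X (val oX) by rewrite /= good_restr; apply: good1 => i _; rewrite ffunE.
have hne : oX != zX.
  apply/eqP => /(congr1 (fun p : idx e X => val p i0)); rewrite /= !restr_funE Hi0 !ffunE.
  by move/eqP; rewrite oneo_neq0.
rewrite (bigD1 zX) //= (bigD1 oX) //= big1 ?addr0.
  by rewrite /fgood gz go conjC_nat mulr1 -mulrDr -[1 + 1]/(2%:R) mulVf ?pnatr_eq0.
move=> p /andP [Hpz Hpo]; rewrite /fgood.
case: (boolP (good X (val p))) => Hg; last by rewrite mul0r mulr0.
exfalso; case/orP: Hg => /forall_inP Hg.
  move/eqP: Hpz; apply; apply: val_inj; apply/ffunP => i; rewrite /= restr_funE.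
  case: ifP => [Hi|Hi]; first by rewrite ffunE; apply/eqP/Hg.
  by have /forallP /(_ i) := valP p; rewrite Hi /= => /eqP ->.
move/eqP: Hpo; apply; apply: val_inj; apply/ffunP => i; rewrite /= restr_funE.
case: ifP => [Hi|Hi]; first by rewrite ffunE; apply/eqP/Hg.
by have /forallP /(_ i) := valP p; rewrite Hi /= => /eqP ->.
Qed.

Lemma density_fgood (C : numClosedFieldType) (n : nat) (e : 'I_n -> nat) (X : {set 'I_n}) :
  (exists i, i \in X) -> density (@fgood C n e X).
Proof.
move=> HX; split; last exact: trace_fgood.
apply: psd_rank1; by rewrite invr_ge0 ler0n.
Qed.

Lemma density_tensor_fgood (C : numClosedFieldType) (n : nat) (e : 'I_n -> nat)
  (P : {set {set 'I_n}}) (hP : partition P [set: 'I_n]) :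
  density (tensor P (fun X => @fgood C n e X)).
Proof.
split.
  pose Psi (a : idx e [set: 'I_n]) : C := \prod_(X in P) (good X (val (restr X (val a))))%:R.
  have -> : tensor P (fun X => @fgood C n e X) =
            fun a b => (\prod_(X in P) (2^-1 : C)) * (Psi a * (Psi b)^*).
    apply: functional_extensionality => a; apply: functional_extensionality => b.
    rewrite /tensor /fgood /Psi rmorph_prod /= -big_split -big_split /=.
    by apply: eq_bigr => X _.
  by apply: psd_rank1; apply: prodr_ge0 => X _; rewrite invr_ge0 ler0n.
rewrite (trace_tensor hP (fun X p => fgood C p p)).
apply: big1 => X HX; apply: trace_fgood; exact: (part_nonempty hP HX).
Qed.

Lemma rectangle (C : numClosedFieldType) (n : nat) (e : 'I_n -> nat)
  (U : {set {set 'I_n}}) (hU : partition U [set: 'I_n]) (Y : {set 'I_n}) (HY : Y \in U)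
  (g : forall X : {set 'I_n}, op C e X) (c1 c2 b : cfg e) :
  Fr (tensor U g) c1 b * Fr (tensor U g) c2 b =
  Fr (tensor U g) (mix Y c1 c2) b * Fr (tensor U g) (mix Y c2 c1) b.
Proof.
rewrite /Fr /tensor /= !(bigD1 Y HY) /=.
have E1 : forall c d : cfg e, restr Y (mix Y c d) = restr Y c.
  by move=> c d; apply: restr_eq => i Hi; rewrite mixE Hi.
have E2 : forall c d : cfg e, \prod_(X | (X \in U) && (X != Y)) g X (restr X (mix Y c d)) (restr X b) =
                      \prod_(X | (X \in U) && (X != Y)) g X (restr X d) (restr X b).
  move=> c d; apply: eq_bigr => X /andP [HX Hne]; congr (g X _ _).
  by apply: restr_eq => i Hi; rewrite mixE (negbTE (part_disj hU HX HY Hne Hi)).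
rewrite !E1 !E2; ring.
Qed.

Lemma refine_of_unc (C : numClosedFieldType) (n : nat) (e : 'I_n -> nat)
  (P : {set {set 'I_n}}) (hP : partition P [set: 'I_n])
  (U : {set {set 'I_n}}) (hU : partition U [set: 'I_n]) :
  unc U (tensor P (fun X => @fgood C n e X)) -> refines P U.
Proof.
move=> [g [_ hg]] X HX.
have [i Hi] := part_nonempty hP HX.
have [Y HY HiY] := part_cover hU i.
exists Y => //; apply/subsetP => j Hj; apply/negPn/negP => HjY.
set rho := tensor P _ in hg.
pose uX : cfg e := restr_fun X (oneF e).
have R := rectangle hU HY g uX (c0 e) (c0 e).
rewrite -hg in R.
have T0 : forall c, Fr rho c (c0 e) =
    \prod_(X' in P) fgood C (restr X' c) (restr X' (c0 e)) by [].
have Tnz : forall c, (forall X', X' \in P -> good X' c) -> Fr rho c (c0 e) != 0.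
  move=> c Hc; rewrite T0; apply/prodf_neq0 => X' HX'.
  rewrite /fgood /= !good_restr Hc // (good0 (c:=c0 e)); last by move=> k _; rewrite ffunE.
  by rewrite conjC_nat mulr1 mulf_neq0 ?invr_eq0 ?pnatr_eq0.
have gc0 : forall X', X' \in P -> good X' (c0 e) by move=> X' _; apply: good0 => k _; rewrite ffunE.
have guX : forall X', X' \in P -> good X' uX.
  move=> X' HX'; case: (eqVneq X' X) => [->|Hne].
    by apply: good1 => k Hk; rewrite /uX restr_funE Hk ffunE.
  by apply: good0 => k Hk; rewrite /uX restr_funE (negbTE (part_disj hP HX' HX Hne Hk)).
have Z : Fr rho (mix Y uX (c0 e)) (c0 e) = 0.
  rewrite T0; apply/eqP/prodf_eq0; exists X => //.
  rewrite /fgood /= good_restr (negbTE (notgood (i:=i) (j:=j) Hi Hj _ _)) ?mul0r ?mulr0 //.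
    by rewrite mixE HiY /uX restr_funE Hi ffunE.
  by rewrite mixE (negbTE HjY) ffunE.
move: R; rewrite Z mul0r => /eqP; rewrite mulf_eq0 => /orP [].
  by apply/negP/Tnz.
by apply/negP/Tnz.
Qed.

Lemma unc_trivial (C : numClosedFieldType) (n : nat) (e : 'I_n -> nat)
  (rho : op C e [set: 'I_n]) : density rho -> unc [set [set: 'I_n]] rho.
Proof.
move=> hd.
exists (fun X (p q : idx e X) => rho (toT (val p)) (toT (val q))); split.
  move=> X; rewrite inE => /eqP ->.
  have -> : (fun p q : idx e [set: 'I_n] => rho (toT (val p)) (toT (val q))) = rho.
    apply: functional_extensionality => a; apply: functional_extensionality => b.
    by rewrite !toT_val.
  exact: hd.
apply: functional_extensionality => a; apply: functional_extensionality => b.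
rewrite /tensor big_set1.
have E : forall a : idx e [set: 'I_n], toT (val (restr [set: 'I_n] (val a))) = a.
  move=> a'; apply: val_inj; apply/ffunP => i; by rewrite /= restr_funE in_setT.
by rewrite !E.
Qed.

Theorem proposition1 (C : numClosedFieldType) (n : nat) (hn : (0 < n)%N)
  (e : 'I_n -> nat)
  (PIIs : {set {set {set {set 'I_n}}}})
  (hPne : PIIs != set0) (hPII : forall S, S \in PIIs -> isPII S)
  (Xi : {set {set {set {set 'I_n}}}}) (hXi : isPIII PIIs Xi) :
  (exists rho : op C e [set: 'I_n], C_unc PIIs Xi rho) <->
  ~~ (meetS Xi \subset joinSbar PIIs Xi).
Proof.
case: hXi => [hsub [hXne hup]].
have partS : forall S xi, S \in PIIs -> xi \in S -> partition xi [set: 'I_n].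
  by move=> S xi HS; case: (hPII S HS) => _ [H _]; apply: H.
have downS : forall S u x, S \in PIIs -> x \in S -> partition u [set: 'I_n] ->
    refines u x -> u \in S.
  by move=> S u x HS; case: (hPII S HS) => _ [_ H]; apply: H.
split.
- move=> [rho [hd [hnot hyes]]].
  have key : forall s : seq {set {set {set 'I_n}}}, (forall x, x \in s -> x \in Xi) ->
      exists p, [/\ partition p [set: 'I_n], unc p rho & forall x, x \in s -> p \in x].
    elim => [|x s IH] Hs.
      by exists [set [set: 'I_n]]; split => //; [apply: partT | apply: unc_trivial].
    have [p [hp hup' hin]] := IH (fun y Hy => Hs y (@mem_behead _ (x :: s) y Hy)).
    have Hx : x \in Xi by apply: Hs; rewrite inE eqxx.
    have HxP : x \in PIIs := subsetP hsub x Hx.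
    have [q Hq huq] := hyes x Hx.
    have hq := partS x q HxP Hq.
    exists (meetP p q); split; first exact: meet_partition.
      exact: unc_meet.
    move=> y; rewrite inE => /orP [/eqP ->|Hy].
      by apply: (downS x _ q) => //; [apply: meet_partition | apply: meet_refr].
    have HyP : y \in PIIs by apply: (subsetP hsub); apply: Hs; rewrite inE Hy orbT.
    by apply: (downS y _ p) => //; [apply: hin | apply: meet_partition | apply: meet_refl].
  have [p [hp hu hin]] := key (enum Xi) (fun x Hx => eq_ind_r is_true Hx (esym (mem_enum Xi x))).
  have HpM : p \in meetS Xi.
    by rewrite /meetS; apply/bigcapP => x Hx; apply: hin; rewrite mem_enum.
  apply/negP => /subsetP /(_ p HpM); rewrite /joinSbar => /bigcupP [x' Hx' Hpx'].
  by apply: (hnot x' Hx'); exists p.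
- move=> /subsetPn [xi0 HM HJ].
  have [x0 Hx0] := set0Pn _ hXne.
  have hxi0 : partition xi0 [set: 'I_n].
    apply: (partS x0) => //; first exact: (subsetP hsub).
    by move: HM; rewrite /meetS => /bigcapP; apply.
  exists (tensor xi0 (fun X => @fgood C n e X)); split; first exact: density_tensor_fgood.
  split.
    move=> x' Hx' [u Hu Hunc].
    have Hx'P : x' \in PIIs by move: Hx'; rewrite inE => /andP [].
    have hu := partS x' u Hx'P Hu.
    have Href := refine_of_unc hxi0 hu Hunc.
    have Hin : xi0 \in x' by apply: (downS x' _ u).
    by move/negP: HJ; apply; rewrite /joinSbar; apply/bigcupP; exists x'.
  move=> x Hx; exists xi0.
    by move: HM; rewrite /meetS => /bigcapP; apply.
  exists (fun X => @fgood C n e X); split => // X HX.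
  apply: density_fgood; exact: (part_nonempty hxi0 HX).
Qed.
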